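(* Let $p_1$ and $p_2$ be probability densities on $\mathbb{R}^n$ and $\omega\in[0,1]$, and let $\mathbf{M}^h_\omega(p_1,p_2)=\frac{1}{\zeta^h}\frac{p_1p_2}{(1-\omega)p_1+\omega p_2}$ be the normalized harmonic mean density, where $\zeta^h=\int_{\mathbb{R}^n}\frac{p_1(\mathbf{x})p_2(\mathbf{x})}{(1-\omega)p_1(\mathbf{x})+\omega p_2(\mathbf{x})}d\mathbf{x}$ (assumed positive). Then \[ \mathbb{D}\big(p_1:\mathbf{M}^h_\omega(p_1,p_2)\big)\le \mathbb{D}(p_1:p_2)\quad\text{and}\quad \mathbb{D}\big(p_2:\mathbf{M}^h_\omega(p_1,p_2)\big)\le \mathbb{D}(p_2:p_1). \]
   Context: $\mathbb{D}(p:q)=\int p(\mathbf{x})\ln\frac{p(\mathbf{x})}{q(\mathbf{x})}d\mathbf{x}\in[0,\infty]$ denotes the (forward) Kullback–Leibler divergence from $p$ to $q$; in general $\mathbb{D}(p:q)\neq\mathbb{D}(q:p)$. The quotient in the harmonic mean is taken to be $0$ where its numerator vanishes. *)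

(* Defs.v *)
From mathcomp Require Import all_boot all_order all_algebra.
From mathcomp Require Import all_classical all_reals all_analysis.
Set Implicit Arguments. Unset Strict Implicit. Unset Printing Implicit Defensive.
Import Order.TTheory GRing.Theory Num.Theory.
Local Open Scope ring_scope.
Local Open Scope ereal_scope.

Section Defs.
Context {d : measure_display} {T : measurableType d} {R : realType}.
Variable mu : {measure set T -> \bar R}.

Definition is_density (p : T -> R) : Prop :=
  [/\ measurable_fun setT p, (forall x, (0 <= p x)%R) &
      \int[mu]_x (p x)%:E = 1].

Definition kl_pt (a b : R) : \bar R :=
  if a == 0%R then 0 else if b == 0%R then +oo else (a * ln (a / b))%:E.

Definition KL (p q : T -> R) : \bar R := \int[mu]_x kl_pt (p x) (q x).

Definition harm (w a b : R) : R :=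
  if (a * b == 0)%R then 0%R else (a * b / ((1 - w) * a + w * b))%R.

Definition zeta_h (w : R) (p1 p2 : T -> R) : \bar R :=
  \int[mu]_x (harm w (p1 x) (p2 x))%:E.

Definition Mh (w : R) (p1 p2 : T -> R) : T -> R :=
  fun x => (harm w (p1 x) (p2 x) / fine (zeta_h w p1 p2))%R.
End Defs.

(* Main.v *)
Require Import Defs.
From mathcomp Require Import all_boot all_order all_algebra.
From mathcomp Require Import all_classical all_reals all_analysis.
From mathcomp Require Import ring lra measurable_realfun.
Import Order.TTheory GRing.Theory Num.Theory.
Import numFieldNormedType.Exports.
Local Open Scope ring_scope.

Section Real.
Variable R : realType.

Lemma ln_le_sub1 (t : R) : 0 < t -> ln t <= t - 1.
Proof.
move=> t0; have := @le_ln1Dx R (t - 1).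
have -> : 1 + (t - 1) = t by rewrite addrC subrK.
apply; lra.
Qed.

Lemma kl_ge (a b : R) : 0 <= a -> 0 <= b -> ((a - b)%:E <= kl_pt a b)%E.
Proof.
move=> a0 b0; rewrite /kl_pt; have [->|an0] := eqVneq a 0.
  by rewrite lee_fin sub0r oppr_le0.
have [->|bn0] := eqVneq b 0; first exact: leey.
rewrite lee_fin.
have ap : 0 < a by rewrite lt_def an0.
have bp : 0 < b by rewrite lt_def bn0.
have h := ln_le_sub1 (b / a) (divr_gt0 bp ap).
have -> : a / b = (b / a)^-1 by rewrite invf_div.
rewrite lnV ?posrE ?divr_gt0 //.
have : a * ln (b / a) <= a * (b / a - 1) by rewrite ler_pM2l.
have -> : a * (b / a - 1) = b - a by rewrite mulrBr mulr1 mulrCA divff // mulr1.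
rewrite mulrN; lra.
Qed.

Lemma harm_ge0 (w a b : R) : 0 <= w <= 1 -> 0 <= a -> 0 <= b -> 0 <= harm w a b.
Proof.
move=> /andP[w0 w1] a0 b0; rewrite /harm; case: ifP => // _.
apply: divr_ge0; first exact: mulr_ge0.
by apply: addr_ge0; apply: mulr_ge0 => //; rewrite subr_ge0.
Qed.

Lemma harm_pos (w a b : R) : 0 <= w <= 1 -> 0 < a -> 0 < b ->
  0 < (1 - w) * a + w * b /\ harm w a b = a * b / ((1 - w) * a + w * b).
Proof.
move=> /andP[w0 w1] a0 b0.
have dp : 0 < (1 - w) * a + w * b.
  have [->|wn0] := eqVneq w 0; first by rewrite subr0 mul1r mul0r addr0.
  apply: ltr_wpDl; first by apply: mulr_ge0; lra.
  by apply: mulr_gt0 => //; rewrite lt_def wn0.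
split => //; rewrite /harm mulf_eq0 (gt_eqF a0) (gt_eqF b0) //.
Qed.

Lemma harm_le (w a b : R) : 0 <= w <= 1 -> 0 <= a -> 0 <= b ->
  harm w a b <= w * a + (1 - w) * b.
Proof.
move=> wi a0 b0; have /andP[w0 w1] := wi.
have [->|an0] := eqVneq a 0.
  by rewrite /harm mul0r eqxx; apply: addr_ge0; apply: mulr_ge0; lra.
have [->|bn0] := eqVneq b 0.
  by rewrite /harm mulr0 eqxx; apply: addr_ge0; apply: mulr_ge0; lra.
have ap : 0 < a by rewrite lt_def an0.
have bp : 0 < b by rewrite lt_def bn0.
have [dp ->] := harm_pos _ _ _ wi ap bp.
rewrite ler_pdivrMr //.
have : 0 <= w * (1 - w) * (a - b) ^+ 2.
  by apply: mulr_ge0; [apply: mulr_ge0; lra| exact: sqr_ge0].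
nra.
Qed.

End Real.

Lemma kl_key (R : realType) (w z a b : R) : 0 <= w <= 1 -> 0 < z -> 0 <= a -> 0 <= b ->
  (kl_pt a (harm w a b / z) <= kl_pt a b + (z * ((1 - w) * a + w * b) - a)%:E)%E.
Proof.
move=> wi z0 a0 b0; have /andP[w0 w1] := wi.
rewrite /kl_pt; have [->|an0] := eqVneq a 0.
  rewrite add0e lee_fin mulr0 add0r subr0; apply: mulr_ge0; first exact: ltW.
  exact: mulr_ge0.
have [->|bn0] := eqVneq b 0.
  by rewrite addye // leey.
have ap : 0 < a by rewrite lt_def an0.
have bp : 0 < b by rewrite lt_def bn0.
have [dp ->] := @harm_pos R w a b wi ap bp.
set den := (1 - w) * a + w * b.
have Mp : 0 < a * b / den / z by apply: divr_gt0 => //; apply: divr_gt0 => //; exact: mulr_gt0.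
rewrite (gt_eqF Mp) -EFinD lee_fin.
have -> : a / (a * b / den / z) = (a / b) * (z * den / a).
  by field; rewrite !gt_eqF.
rewrite lnM ?posrE; last 2 first.
- exact: divr_gt0.
- by apply: divr_gt0 => //; exact: mulr_gt0.
rewrite mulrDr lerD2l.
have h := @ln_le_sub1 R (z * den / a) (divr_gt0 (mulr_gt0 z0 dp) ap).
have : a * ln (z * den / a) <= a * (z * den / a - 1) by rewrite ler_pM2l.
have -> : a * (z * den / a - 1) = z * den - a by field; rewrite gt_eqF.
by [].
Qed.

Section Meas.
Context d (T : measurableType d) (R : realType) (mu : {measure set T -> \bar R}).

Lemma kl_meas (p q : T -> R) : measurable_fun [set: T] p -> measurable_fun setT q ->
  (forall x, 0 <= p x) -> (forall x, 0 <= q x) ->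
  measurable_fun [set: T] (fun x => kl_pt (p x) (q x)).
Proof.
move=> mp mq p0 q0.
have -> : (fun x => kl_pt (p x) (q x)) = (fun x => if p x == 0 then 0%E
    else if q x == 0 then +oo%E else ((p x) * (ln (p x) - ln (q x)))%:E).
  apply/funext => x; rewrite /kl_pt; have [//|pn0] := eqVneq (p x) 0.
  have [//|qn0] := eqVneq (q x) 0.
  by rewrite ln_div // posrE lt_def ?pn0 ?qn0 ?p0 ?q0.
apply: measurable_fun_ifT; first exact: measurable_fun_eqr.
  exact: measurable_cst.
apply: measurable_fun_ifT; first exact: measurable_fun_eqr.
  exact: measurable_cst.
apply/measurable_EFinP; apply: measurable_funM => //.
by apply: measurable_funB; apply: measurableT_comp => //; exact: measurable_ln.
Qed.

Lemma harm_meas (w : R) (p q : T -> R) : 0 <= w <= 1 -> measurable_fun [set: T] p -> measurable_fun setT q ->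
  (forall x, 0 <= p x) -> (forall x, 0 <= q x) ->
  measurable_fun [set: T] (fun x => harm w (p x) (q x)).
Proof.
move=> /andP[w0 w1] mp mq p0 q0.
have -> : (fun x => harm w (p x) (q x)) = (fun x => if p x * q x == 0 then 0
    else p x * q x * ((1 - w) * p x + w * q x) `^ (-1)).
  apply/funext => x; rewrite /harm; case: ifP => // _.
  rewrite powR_inv1 //; apply: addr_ge0; apply: mulr_ge0 => //; lra.
have mpq : measurable_fun [set: T] (fun x => p x * q x) by exact: measurable_funM.
apply: measurable_fun_ifT.
- by apply: measurable_fun_eqr => //; exact: measurable_cst.
- exact: measurable_cst.
apply: measurable_funM => //.
have mpw : measurable_fun [set: R] (fun y : R => y `^ (-1)) by exact: measurable_powR.
have md : measurable_fun [set: T] (fun x => (1 - w) * p x + w * q x).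
  by apply: measurable_funD; apply: measurable_funM => //; exact: measurable_cst.
exact: (measurableT_comp mpw md).
Qed.


Local Open Scope ereal_scope.

Lemma le_integral_meas (f h : T -> \bar R) : measurable_fun [set: T] f ->
  measurable_fun [set: T] h -> (forall x, f x <= h x) ->
  \int[mu]_x f x <= \int[mu]_x h x.
Proof.
move=> mf mh fh; rewrite [X in X <= _]integralE [X in _ <= X]integralE; apply: leeB.
- apply: ge0_le_integral => //.
  + exact: measurable_funepos.
  + exact: measurable_funepos.
  + by move=> x _; apply: (@funepos_le _ _ setT); [move=> ? ?; exact: fh | exact: in_setT].
- apply: ge0_le_integral => //.
  + exact: measurable_funeneg.
  + exact: measurable_funeneg.
  + by move=> x _; apply: (@funeneg_le _ _ setT); [move=> ? ?; exact: fh | exact: in_setT].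
Qed.

Lemma density_int (p : T -> R) : is_density mu p -> mu.-integrable [set: T] (EFin \o p).
Proof.
move=> [mp p0 ip]; apply/integrableP; split; first exact/measurable_EFinP.
rewrite (_ : (fun x => `|(EFin \o p) x|) = (fun x => (p x)%:E)).
  by rewrite ip ltry.
by apply/funext => x /=; rewrite ger0_norm.
Qed.


Lemma main_ineq (p q : T -> R) (w : R) : is_density mu p -> is_density mu q ->
  (0 <= w)%R -> (w <= 1)%R -> 0 < zeta_h mu w p q ->
  KL mu p (Mh mu w p q) <= KL mu p q.
Proof.
move=> dp dq w0 w1 zpos.
have ipE := density_int _ dp; have iqE := density_int _ dq.
case: dp => mp p0 ip; case: dq => mq q0 iq.
have wi : (0 <= w <= 1)%R by apply/andP.
pose h := fun x => harm w (p x) (q x).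
have mh : measurable_fun [set: T] h := harm_meas _ _ _ wi mp mq p0 q0.
have h0 x : (0 <= h x)%R := @harm_ge0 R _ _ _ wi (p0 x) (q0 x).
have mpE : measurable_fun [set: T] (EFin \o p) by exact/measurable_EFinP.
have mqE : measurable_fun [set: T] (EFin \o q) by exact/measurable_EFinP.
have zle1 : zeta_h mu w p q <= 1.
  rewrite /zeta_h (@le_trans _ _ (\int[mu]_x ((w%:E * (p x)%:E) + ((1 - w)%:E * (q x)%:E))))//.
    apply: ge0_le_integral => //.
    - by move=> x _; exact: (h0 x).
    - exact/(@measurable_EFinP _ _ _ _ h).
    - by apply: emeasurable_funD; apply: measurable_funeM.
    - by move=> x _; rewrite -!EFinM -EFinD lee_fin; exact: (@harm_le R w _ _ wi).
  rewrite ge0_integralD //; last 4 first.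
  - by move=> x _; apply: mule_ge0; rewrite lee_fin.
  - exact: measurable_funeM.
  - by move=> x _; apply: mule_ge0; rewrite lee_fin // subr_ge0.
  - exact: measurable_funeM.
  rewrite ge0_integralZl_EFin //; last by move=> x _; rewrite lee_fin.
  rewrite ge0_integralZl_EFin //; last 2 first.
  - by move=> x _; rewrite lee_fin.
  - by rewrite subr_ge0.
  by rewrite ip iq !mule1 -EFinD addrC subrK.
have zfin : zeta_h mu w p q \is a fin_num.
  by rewrite ge0_fin_numE ?(ltW zpos) // (le_lt_trans zle1) // ltry.
set z := fine (zeta_h mu w p q).
have zE : zeta_h mu w p q = z%:E by rewrite fineK.
have z0 : (0 < z)%R by rewrite -lte_fin -zE.
have z1 : (z <= 1)%R by rewrite -lee_fin -zE.
pose A := fun x => kl_pt (p x) (h x / z).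
pose B := fun x => kl_pt (p x) (q x).
pose g := fun x => (z * ((1 - w) * p x + w * q x) - p x)%R.
have -> : KL mu p (Mh mu w p q) = \int[mu]_x A x by [].
have -> : KL mu p q = \int[mu]_x B x by [].
have mA : measurable_fun [set: T] A.
  apply: kl_meas => // x; first by apply: measurable_funM => //; exact: measurable_cst.
  by apply: divr_ge0 => //; exact: ltW.
have mB : measurable_fun [set: T] B := kl_meas _ _ mp mq p0 q0.
have B_ge x : - (q x)%:E <= B x.
  apply: le_trans (@kl_ge R _ _ (p0 x) (q0 x)); rewrite lee_fin; have := p0 x; lra.
have [Binf|Bfin] := eqVneq (\int[mu]_x B x) +oo; first by rewrite Binf leey.
have negle : \int[mu]_x B^\- x <= 1.
  rewrite -iq; apply: ge0_le_integral => //.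
  - exact: measurable_funeneg.
  - move=> x _; rewrite funenegE ge_max; apply/andP; split.
      by rewrite leeNl.
    by rewrite lee_fin.
have negfin : \int[mu]_x B^\- x \is a fin_num.
  rewrite ge0_fin_numE ?(le_lt_trans negle) ?ltry //.
  by apply: integral_ge0 => x _; exact: funeneg_ge0.
have posfin : \int[mu]_x B^\+ x < +oo.
  rewrite ltNge leye_eq; apply/negP => /eqP pinf; move: Bfin.
  by rewrite integralE pinf -(fineK negfin).
have Bint : mu.-integrable [set: T] B.
  apply/integrableP; split => //.
  rewrite (_ : (fun x => `|B x|) = B^\+ \+ B^\-); last by rewrite -fune_abse.
  rewrite ge0_integralD //.
  all: try by move=> x _; exact: funepos_ge0.
  all: try by move=> x _; exact: funeneg_ge0.
  all: try exact: measurable_funepos.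
  all: try exact: measurable_funeneg.
  by apply: lte_add_pinfty => //; rewrite (le_lt_trans negle) ?ltry.
pose f1 := fun x => (z * ((1 - w) * p x + w * q x))%R.
have mf1 : measurable_fun [set: T] f1.
  apply: measurable_funM; first exact: measurable_cst.
  by apply: measurable_funD; apply: measurable_funM => //; exact: measurable_cst.
have f10 x : (0 <= f1 x)%R.
  apply: mulr_ge0; first exact: ltW.
  by apply: addr_ge0; apply: mulr_ge0 => //; rewrite subr_ge0.
have if1 : \int[mu]_x (f1 x)%:E = z%:E.
  have hm : measurable_fun [set: T] (fun x => ((1 - w) * p x + w * q x)%:E).
    by apply/measurable_EFinP; apply: measurable_funD; apply: measurable_funM => //; exact: measurable_cst.
  have hn : forall x, [set: T]%classic x -> (0 <= ((1 - w) * p x + w * q x)%:E).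
    by move=> x _; rewrite lee_fin addr_ge0 // mulr_ge0 // subr_ge0.
  have z0' : (0 <= z)%R by exact: ltW.
  rewrite /f1; under eq_integral do rewrite EFinM.
  rewrite ge0_integralZl_EFin //.
  under eq_integral do rewrite EFinD !EFinM.
  have n1 : forall x, [set: T]%classic x -> 0 <= (1 - w)%:E * (p x)%:E.
    by move=> x _; apply: mule_ge0; rewrite lee_fin // subr_ge0.
  have n2 : forall x, [set: T]%classic x -> 0 <= w%:E * (q x)%:E.
    by move=> x _; apply: mule_ge0; rewrite lee_fin.
  have m1 : measurable_fun [set: T] (fun x => (1 - w)%:E * (p x)%:E) by exact: measurable_funeM.
  have m2 : measurable_fun [set: T] (fun x => w%:E * (q x)%:E) by exact: measurable_funeM.
  rewrite ge0_integralD //.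
  have pn : forall x, [set: T]%classic x -> 0 <= (p x)%:E by move=> x _; rewrite lee_fin.
  have qn : forall x, [set: T]%classic x -> 0 <= (q x)%:E by move=> x _; rewrite lee_fin.
  have w0' : (0 <= 1 - w)%R by rewrite subr_ge0.
  rewrite ge0_integralZl_EFin // ge0_integralZl_EFin //.
  by rewrite ip iq !mule1 -EFinD subrK mule1.
have if1i : mu.-integrable [set: T] (EFin \o f1).
  apply/integrableP; split; first exact/measurable_EFinP.
  rewrite (_ : (fun x => `|(EFin \o f1) x|) = (fun x => (f1 x)%:E)).
    by rewrite if1 ltry.
  by apply/funext => x /=; rewrite ger0_norm.
have gint : mu.-integrable [set: T] (EFin \o g).
  apply: (eq_integrable measurableT _ _ _ (integrableB measurableT if1i ipE)) => x _.
  by rewrite /g /= EFinB.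
have gval : \int[mu]_x (g x)%:E = (z - 1)%:E.
  rewrite (_ : (fun x => (g x)%:E) = (fun x => (f1 x)%:E - (p x)%:E)).
    by rewrite integralB_EFin // if1 ip -EFinB.
  by apply/funext => x; rewrite /g EFinB.
apply: (@le_trans _ _ (\int[mu]_x (B x + (g x)%:E))).
  apply: le_integral_meas => //.
    by apply: emeasurable_funD => //; exact: (measurable_int _ gint).
  by move=> x; exact: (@kl_key R w z (p x) (q x) wi z0 (p0 x) (q0 x)).
rewrite integralD // gval.
rewrite -[leRHS]adde0 leeD2l //; rewrite lee_fin subr_le0 //.
Qed.

End Meas.

Lemma harm_sym (R : realType) (w a b : R) : harm w a b = harm (1 - w) b a.
Proof. by rewrite /harm [b * a]mulrC subKr [w * b + _]addrC. Qed.

Theorem proposition1 (d : measure_display) (T : measurableType d) (R : realType)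
  (mu : {measure set T -> \bar R}) (p1 p2 : T -> R) (w : R) :
  is_density mu p1 -> is_density mu p2 ->
  0 <= w -> w <= 1 ->
  (0 < zeta_h mu w p1 p2)%E ->
  (KL mu p1 (Mh mu w p1 p2) <= KL mu p1 p2)%E /\
  (KL mu p2 (Mh mu w p1 p2) <= KL mu p2 p1)%E.
Proof.
move=> d1 d2 w0 w1 zp; split; first exact: main_ineq.
have zE : zeta_h mu w p1 p2 = zeta_h mu (1 - w) p2 p1.
  by rewrite /zeta_h; under eq_integral do rewrite harm_sym.
have -> : Mh mu w p1 p2 = Mh mu (1 - w) p2 p1.
  by apply/funext => x; rewrite /Mh zE harm_sym.
apply: main_ineq => //; first by rewrite subr_ge0.
  by rewrite lerBlDr lerDl.
by rewrite -zE.
Qed.
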